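(* Let $R$ be a commutative Noetherian local ring with total quotient ring $Q$ (the localization at the set $S$ of nonzerodivisors), and let $M$ be a finitely generated $R$-module of constant rank $n$ such that $E=\operatorname{End}_R(M)$ is an $R^*$-algebra. Identifying $E_S\cong \operatorname{End}_Q(M_S)\cong M_n(Q)$ (via a $Q$-basis of the free $Q$-module $M_S$), the induced $Q^*$-algebra structure on $E_S$ has the form $A^*=C^{-1}A^TC$ for some invertible $C\in M_n(Q)$ and $a\in Q$ with $C^T=aC$, $a^2=1$; write $a=r/s$ with $r,s$ nonzerodivisors of $R$. Then the $R$-submodule $T=\langle s\,x\otimes y - r\,y\otimes x \mid x,y\in M\rangle$ of $M_*\otimes_E M$ is a torsion $R$-module (i.e. $T\otimes_R Q=0$).
   Context: An $R$-algebra $E$ (possibly noncommutative) is an $R^*$-algebra if there is a map of abelian groups $(-)^*:E\to E$ with $(ab)^*=b^*a^*$, $1_E^*=1_E$, $(ra)^*=ra^*$ for $r\in R$, and $a^{**}=a$ for all $a,b\in E$. $M$ is a left $E$-module via $f\cdot x=f(x)$, and $M_*$ denotes $M$ regarded as a right $E$-module via $x\cdot f=f^*(x)$. $M$ has constant rank $n$ if $M\otimes_R Q$ is a free $Q$-module of rank $n$. The $Q^*$-structure on $E_S$ is $(f/u)^*=f^*/u$. *)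

(* Defs.v *)
From HB Require Import structures.
From mathcomp Require Import all_boot all_order all_algebra.
Set Implicit Arguments. Unset Strict Implicit. Unset Printing Implicit Defensive.
Import Order.TTheory GRing.Theory Num.Theory.
Local Open Scope ring_scope.

Section Defs.
Variable R : comPzRingType.

Definition nzd (u : R) : Prop := forall x : R, u * x = 0 -> x = 0.

Definition is_ideal (I : R -> Prop) : Prop :=
  [/\ I 0, (forall x y, I x -> I y -> I (x + y)) & (forall c x, I x -> I (c * x))].

Definition maximal_ideal (I : R -> Prop) : Prop :=
  [/\ is_ideal I, ~ I 1 &
     forall J, is_ideal J -> (forall x, I x -> J x) -> ~ J 1 -> forall x, J x -> I x].

Definition local_ring : Prop :=
  exists m, maximal_ideal m /\
    forall m', maximal_ideal m' -> forall x, m' x <-> m x.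

Definition noetherian : Prop :=
  forall I, is_ideal I -> exists gs : seq R,
    forall x, I x <-> exists cs : seq R,
      size cs = size gs /\ x = \sum_(i < size gs) cs`_i * gs`_i.

Variable M : lmodType R.

Definition fin_gen : Prop :=
  exists gs : seq M, forall x : M, exists cs : seq R,
    size cs = size gs /\ x = \sum_(i < size gs) cs`_i *: gs`_i.

(* elements of E = End_R(M) *)
Definition Rlin (f : M -> M) : Prop :=
  forall (c : R) (x y : M), f (c *: x + y) = c *: f x + f y.

Definition Rstar_algebra (star : (M -> M) -> (M -> M)) : Prop :=
  (forall f, Rlin f -> Rlin (star f)) /\
  [/\ forall f g, Rlin f -> Rlin g -> star (f \+ g) = star f \+ star g,
      forall f g, Rlin f -> Rlin g -> star (f \o g) = star g \o star f,
      star id = id,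
      forall (c : R) f, Rlin f -> star (fun x => c *: f x) = (fun x => c *: star f x)
    & forall f, Rlin f -> star (star f) = f].

(* E-balanced biadditive maps M_* x M -> A, where x . f := star f x *)
Definition balanced (star : (M -> M) -> (M -> M)) (A : zmodType)
    (beta : M -> M -> A) : Prop :=
  [/\ forall x x' y, beta (x + x') y = beta x y + beta x' y,
      forall x y y', beta x (y + y') = beta x y + beta x y'
    & forall f, Rlin f -> forall x y, beta (star f x) y = beta x (f y)].

(* A formal R-combination  sum c (x (x) y)  (i.e. sum (c x) (x) y) in M_* (x)_E M
   is zero iff it is killed by every E-balanced biadditive map
   (universal property of the tensor product). *)
Definition tensor_zero (star : (M -> M) -> (M -> M)) (t : seq (R * M * M)) : Prop :=
  forall (A : zmodType) (beta : M -> M -> A), balanced star beta ->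
    \sum_(p <- t) beta (p.1.1 *: p.1.2) p.2 = 0.

(* the element  sum_k c_k (s x_k (x) y_k - r y_k (x) x_k)  of T *)
Definition T_elem (s r : R) (l : seq (R * M * M)) : seq (R * M * M) :=
  flatten [seq [:: (p.1.1 * s, p.1.2, p.2); (- (p.1.1 * r), p.2, p.1.2)] | p <- l].

Definition rscale (u : R) (t : seq (R * M * M)) : seq (R * M * M) :=
  [seq (u * p.1.1, p.1.2, p.2) | p <- t].

End Defs.

Definition total_quotient (R : comPzRingType) (Q : comUnitRingType)
    (iota : {rmorphism R -> Q}) : Prop :=
  [/\ forall u, nzd u -> iota u \is a GRing.unit,
      forall q : Q, exists a u, nzd u /\ q = iota a / iota u
    & forall a, iota a = 0 -> a = 0].

Definition module_localization (R : comPzRingType) (M : lmodType R)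
    (Q : comUnitRingType) (iota : {rmorphism R -> Q}) (N : lmodType Q)
    (jM : M -> N) : Prop :=
  [/\ forall x y, jM (x + y) = jM x + jM y,
      forall c x, jM (c *: x) = iota c *: jM x,
      forall v : N, exists x u, nzd u /\ v = (iota u)^-1 *: jM x
    & forall x, jM x = 0 -> exists u, nzd u /\ u *: x = 0].

Definition is_basis (Q : comUnitRingType) (N : lmodType Q) (n : nat)
    (b : 'I_n -> N) : Prop :=
  forall v : N, exists! c : 'cV[Q]_n, v = \sum_i c i ord0 *: b i.

Definition represents (R : comPzRingType) (M : lmodType R)
    (Q : comUnitRingType) (N : lmodType Q) (jM : M -> N) (n : nat)
    (b : 'I_n -> N) (f : M -> M) (A : 'M[Q]_n) : Prop :=
  forall (x : M) (c : 'cV[Q]_n), jM x = \sum_i c i ord0 *: b i ->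
    jM (f x) = \sum_i (A *m c) i ord0 *: b i.

(* Main.v *)
Require Import Defs.
From HB Require Import structures.
From mathcomp Require Import all_boot all_order all_algebra.
From mathcomp Require Import ring.
From Stdlib Require Import ClassicalEpsilon.
Import Order.TTheory GRing.Theory Num.Theory.
Local Open Scope ring_scope.
Set Implicit Arguments. Unset Strict Implicit.

Lemma nzdM (R : comPzRingType) (u v : R) : nzd u -> nzd v -> nzd (u * v).
Proof. by move=> hu hv x; rewrite -mulrA => /hu /hv. Qed.

Lemma nzd1 (R : comPzRingType) : nzd (1 : R).
Proof. by move=> x; rewrite mul1r. Qed.

Lemma Rlin0 (R : comPzRingType) (M : lmodType R) (f : M -> M) : Rlin f -> f 0 = 0.
Proof.
move=> hf; have := hf 1 0 0; rewrite scaler0 addr0 scale1r.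
by move=> /(congr1 (fun t => t - f 0)); rewrite subrr addrK.
Qed.

Lemma RlinZ (R : comPzRingType) (M : lmodType R) (f : M -> M) c x :
  Rlin f -> f (c *: x) = c *: f x.
Proof. by move=> hf; have := hf c x 0; rewrite addr0 (Rlin0 hf) addr0. Qed.

Lemma RlinD (R : comPzRingType) (M : lmodType R) (f : M -> M) x y :
  Rlin f -> f (x + y) = f x + f y.
Proof. by move=> hf; have := hf 1 x y; rewrite !scale1r. Qed.

Lemma bal0 (R : comPzRingType) (M : lmodType R) star (A : zmodType) (beta : M -> M -> A) y :
  balanced star beta -> beta 0 y = 0.
Proof.
case=> h1 _ _; have := h1 0 0 y; rewrite addr0.
by move=> /(congr1 (fun t => t - beta 0 y)); rewrite subrr addrK.
Qed.

Lemma balN (R : comPzRingType) (M : lmodType R) star (A : zmodType) (beta : M -> M -> A) x y :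
  balanced star beta -> beta (- x) y = - beta x y.
Proof.
move=> hb; have [h1 _ _] := hb; have := h1 x (- x) y; rewrite subrr (bal0 _ hb).
by move=> /esym/eqP; rewrite addrC addr_eq0 => /eqP.
Qed.

Lemma balZ (R : comPzRingType) (M : lmodType R) star (A : zmodType) (beta : M -> M -> A) c x y :
  Rstar_algebra star -> balanced star beta -> beta x (c *: y) = beta (c *: x) y.
Proof.
move=> [hl [_ _ hid hsc _]] [_ _ h3].
have lid : Rlin (@id M) by [].
have hs := hsc c id lid; rewrite hid in hs.
have lf : Rlin (fun x : M => c *: id x).
  by move=> c' x' y'; rewrite /= scalerDr !scalerA mulrC.
by have := h3 _ lf x y; rewrite hs.
Qed.

Lemma balscale (R : comPzRingType) (M : lmodType R) star (A : zmodType) (beta : M -> M -> A) k :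
  Rstar_algebra star -> balanced star beta -> balanced star (fun x y => beta (k *: x) y).
Proof.
move=> hs hb; have [h1 h2 h3] := hb; split.
- by move=> x x' y; rewrite scalerDr h1.
- by move=> x y y'; rewrite h2.
- move=> f hf x y; have [hl _] := hs.
  by rewrite -(RlinZ k x (hl f hf)) h3.
Qed.
Definition works (R : comPzRingType) (M : lmodType R) (star : (M -> M) -> (M -> M))
  (s r u : R) (x y : M) : Prop :=
  forall (A : zmodType) (beta : M -> M -> A), balanced star beta ->
    beta ((u * s) *: x) y = beta ((u * r) *: y) x.

Lemma works_term (R : comPzRingType) (M : lmodType R) star s r v (x y : M)
  (A : zmodType) (beta : M -> M -> A) m :
  Rstar_algebra star -> works star s r v x y -> balanced star beta ->
  beta ((m * v * s) *: x) y + beta ((- (m * v * r)) *: y) x = 0.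
Proof.
move=> hs hw hb.
have hbp := balscale m hs hb.
have := hw _ _ hbp; rewrite /= !scalerA !mulrA => ->.
by rewrite scaleNr (balN _ _ hb) subrr.
Qed.

Lemma works_list (R : comPzRingType) (M : lmodType R) star (s r : R) :
  Rstar_algebra star ->
  (forall x y : M, exists v, nzd v /\ works star s r v x y) ->
  forall l, exists u, nzd u /\ forall k, tensor_zero star (rscale (k * u) (T_elem s r l)).
Proof.
move=> hs hp; elim=> [|[[c x] y] l [u [hu IH]]].
  by exists 1; split; [exact: nzd1 | move=> k A beta hb; rewrite big_nil].
have [v [hv hw]] := hp x y.
exists (u * v); split; first exact: nzdM.
move=> k A beta hb.
rewrite /T_elem /= -/(T_elem s r l) !big_cons.
have := IH (k * v) A beta hb; rewrite /rscale.
have -> : k * v * u = k * (u * v) by ring.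
move=> ->; rewrite addr0 /=.
have e1 : k * (u * v) * (c * s) = (k * u * c) * v * s by ring.
have e2 : k * (u * v) * - (c * r) = - ((k * u * c) * v * r) by ring.
by rewrite e1 e2 (works_term _ hs hw hb).
Qed.
Lemma pair_zero (R : comPzRingType) (M : lmodType R) star
  (Q : comUnitRingType) (iota : {rmorphism R -> Q})
  (N : lmodType Q) (jM : M -> N) (b : 'I_0 -> N) (r s : R) :
  Rstar_algebra star -> module_localization iota jM -> is_basis b ->
  forall x y : M, exists v, nzd v /\ works star s r v x y.
Proof.
move=> hs [jD jZ jsurj jtor] hbasis.
have tor : forall z : M, exists u, nzd u /\ u *: z = 0.
  move=> z; apply: jtor; have [c [hc _]] := hbasis (jM z).
  by rewrite hc big_ord0.
move=> x y; have [ux [hux ex]] := tor x; have [uy [huy ey]] := tor y.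
exists (ux * uy); split; first exact: nzdM.
move=> A beta hb.
have -> : (ux * uy * s) *: x = (uy * s) *: (ux *: x) by rewrite scalerA; congr (_ *: _); ring.
have -> : (ux * uy * r) *: y = (ux * r) *: (uy *: y) by rewrite scalerA; congr (_ *: _); ring.
by rewrite ex ey !scaler0 !(bal0 _ hb).
Qed.
Lemma pair_succ (R : comPzRingType) (M : lmodType R) star
  (Q : comUnitRingType) (iota : {rmorphism R -> Q})
  (N : lmodType Q) (jM : M -> N) (n : nat) (b : 'I_n.+1 -> N)
  (C : 'M[Q]_n.+1) (a : Q) (r s : R) :
  fin_gen M -> Rstar_algebra star -> total_quotient iota ->
  module_localization iota jM -> is_basis b ->
  C^T = a *: C ->
  (forall f, Rlin f -> forall A : 'M[Q]_n.+1, represents jM b f A ->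
     represents jM b (star f) (invmx C *m A^T *m C)) ->
  iota r = a * iota s ->
  forall x y : M, exists v, nzd v /\ works star s r v x y.
Proof.
move=> hfg hs [tq1 tq2 tq3] [jD jZ jsurj jtor] hbasis hCT hstar hra.
have iinj : injective iota.
  move=> p q h; apply/eqP; rewrite -subr_eq0; apply/eqP/tq3.
  by rewrite rmorphB h subrr.
have [cf [cfE cfU]] : exists cf : N -> 'cV[Q]_n.+1,
    (forall v, v = \sum_i cf v i ord0 *: b i) /\
    (forall v (c : 'cV[Q]_n.+1), v = \sum_i c i ord0 *: b i -> c = cf v).
  exists (fun v => proj1_sig (constructive_indefinite_description _ (hbasis v))).
  split=> v; case: (constructive_indefinite_description _ _) => c [h1 h2] //=.
  by move=> c' /h2 ->.
have cfL : forall q v v', cf (q *: v + v') = q *: cf v + cf v'.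
  move=> q v v'; symmetry; apply: cfU.
  transitivity (q *: (\sum_i cf v i ord0 *: b i) + \sum_i cf v' i ord0 *: b i);
    first by rewrite -!cfE.
  rewrite scaler_sumr -big_split /=; apply: eq_bigr => i _.
  by rewrite !mxE scalerDl scalerA.
pose cfj z := cf (jM z) ord0 ord0.
have cfjL : forall c z z', cfj (c *: z + z') = iota c * cfj z + cfj z'.
  by move=> c z z'; rewrite /cfj jD jZ cfL !mxE.
have cfj0 : cfj 0 = 0.
  have := cfjL 1 0 0; rewrite scale1r addr0 rmorph1 mul1r.
  by move=> /(congr1 (fun t => t - cfj 0)); rewrite subrr addrK.
have [d [hd hdz]] : exists d, nzd d /\ forall z, exists t, iota t = iota d * cfj z.
  have [gs hgs] := hfg.
  suff: forall gs : seq M, exists d, nzd d /\ forall cs : seq R, size cs = size gs ->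
      exists t, iota t = iota d * cfj (\sum_(i < size gs) cs`_i *: gs`_i).
    move=> /(_ gs) [d [hd H]]; exists d; split=> // z.
    by have [cs [hcs ->]] := hgs z; exact: H.
  elim=> [|g gs' [d [hd H]]].
    exists 1; split; first exact: nzd1.
    by move=> cs _; exists 0; rewrite big_ord0 cfj0 rmorph0 mulr0.
  have [a0 [u0 [hu0 e0]]] := tq2 (cfj g).
  exists (d * u0); split; first exact: nzdM.
  case=> [|c cs] //= [hsz]; rewrite big_ord_recl /=.
  have [t ht] := H cs hsz.
  exists (d * c * a0 + u0 * t).
  rewrite cfjL rmorphD !rmorphM ht e0 mulrDr; congr (_ + _); last by ring.
  have hU := tq1 u0 hu0.
  transitivity (iota d * iota c * iota a0 * (iota u0 * (iota u0)^-1));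
    first by rewrite divrr // mulr1.
  by ring.
have [lam hlam] : exists lam : M -> R, forall z, iota (lam z) = iota d * cfj z.
  exists (fun z => proj1_sig (constructive_indefinite_description _ (hdz z))).
  by move=> z; case: (constructive_indefinite_description _ _).
have lamL : forall c z z', lam (c *: z + z') = c * lam z + lam z'.
  by move=> c z z'; apply: iinj; rewrite rmorphD rmorphM !hlam cfjL; ring.
have [x0 [u [hu e]]] := jsurj (b ord0).
have ex0 : jM x0 = iota u *: b ord0.
  by rewrite e scalerA divrr ?scale1r //; exact: tq1.
have hc0 : cfj x0 = iota u.
  rewrite /cfj -(cfU (jM x0) (\col_(i < n.+1) (if i == ord0 then iota u else 0))).
    by rewrite mxE eqxx.
  rewrite ex0 (bigD1 ord0) //= big1 ?addr0; first by rewrite mxE eqxx.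
  by move=> i /negbTE hi; rewrite mxE hi scale0r.
pose k := d * u.
have hk : lam x0 = k by apply: iinj; rewrite hlam hc0 rmorphM.
have nzk : nzd k by exact: nzdM.
pose l := \row_(j < n.+1) (if j == ord0 then iota d else 0).
have hl : forall z, l *m cf (jM z) = (iota (lam z))%:M.
  move=> z; apply/matrixP => i j; rewrite (ord1 i) (ord1 j) !mxE /= mulr1n.
  rewrite (bigD1 ord0) //= big1 ?addr0; first by rewrite mxE eqxx hlam.
  by move=> i' /negbTE hi; rewrite mxE hi mul0r.
have rep1 : forall p : M, represents jM b (fun z => lam z *: p) (cf (jM p) *m l).
  move=> p z c hz; rewrite (cfU _ _ hz) jZ.
  have ep := cfE (jM p); rewrite [in LHS]ep scaler_sumr; apply: eq_bigr => i _.
  by rewrite -mulmxA hl mul_mx_scalar mxE scalerA mulrC.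
have lin1 : forall p : M, Rlin (fun z => lam z *: p).
  by move=> p c z z'; rewrite lamL scalerDl scalerA.
have hcomp : forall F G A B, represents jM b F A -> represents jM b G B ->
    represents jM b (F \o G) (A *m B).
  move=> F G A B hF hG z c hz; rewrite /= (hF (G z) (B *m c)) ?mulmxA //; exact: hG.
have t1 : forall K : 'M[Q]_1, K^T = K.
  by move=> K; apply/matrixP => i j; rewrite (ord1 i) (ord1 j) mxE.
have eX : forall p q : 'cV[Q]_n.+1, invmx C *m (p *m l)^T *m C *m (q *m l)
    = invmx C *m l^T *m (p^T *m C *m q) *m l.
  by move=> p q; rewrite trmx_mul !mulmxA.
have eK : forall p q : 'cV[Q]_n.+1, p^T *m C *m q = a *: (q^T *m C *m p).
  move=> p q; rewrite -[LHS]t1 !trmx_mul trmxK hCT.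
  by rewrite -scalemxAl -scalemxAr mulmxA.
have hsc : forall q (X : 'M[Q]_n.+1) (c : 'cV[Q]_n.+1),
    q *: \sum_i (X *m c) i ord0 *: b i = \sum_i ((q *: X) *m c) i ord0 *: b i.
  move=> q X c; rewrite scaler_sumr; apply: eq_bigr => i _.
  by rewrite -scalemxAl [in RHS]mxE scalerA.
move=> x y.
pose P := fun z => lam z *: y.
pose Qf := fun z => lam z *: x.
have hP : Rlin P := lin1 y.
have hQ : Rlin Qf := lin1 x.
have repP := hstar P hP _ (rep1 y).
have repQ := hstar Qf hQ _ (rep1 x).
have r2 : jM (star P (Qf x0)) = \sum_i ((invmx C *m (cf (jM y) *m l)^T *m C *m (cf (jM x) *m l)) *m cf (jM x0)) i ord0 *: b i.
  exact: (hcomp _ _ _ _ repP (rep1 x) x0 _ (cfE _)).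
have r1 : jM (star Qf (P x0)) = \sum_i ((invmx C *m (cf (jM x) *m l)^T *m C *m (cf (jM y) *m l)) *m cf (jM x0)) i ord0 *: b i.
  exact: (hcomp _ _ _ _ repQ (rep1 y) x0 _ (cfE _)).
have key : iota s *: (invmx C *m (cf (jM y) *m l)^T *m C *m (cf (jM x) *m l))
   = iota r *: (invmx C *m (cf (jM x) *m l)^T *m C *m (cf (jM y) *m l)).
  by rewrite !eX eK -scalemxAr -scalemxAl scalerA mulrC -hra.
have hjz : jM (s *: star P (Qf x0) - r *: star Qf (P x0)) = 0.
  rewrite -scaleNr jD !jZ r1 r2 rmorphN scaleNr !hsc key.
  by rewrite subrr.
have [v [hv ev]] := jtor _ hjz.
move: ev; rewrite scalerBr !scalerA => /eqP; rewrite subr_eq0 => /eqP ev.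
exists (k * k * v); split; first by apply: nzdM => //; exact: nzdM.
move=> A beta hb; have [hb1 hb2 hb3] := hb.
have [hl' _] := hs.
have E1 : beta ((v * s) *: Qf x0) (P x0) = beta ((v * r) *: P x0) (Qf x0).
  rewrite -(hb3 P hP) -(hb3 Qf hQ) (RlinZ _ _ (hl' _ hP)) (RlinZ _ _ (hl' _ hQ)).
  by rewrite ev.
move: E1; rewrite /P /Qf hk !(balZ _ _ _ hs hb) !scalerA.
have -> : k * (v * s * k) = k * k * v * s by ring.
by have -> : k * (v * r * k) = k * k * v * r by ring.
Qed.

Theorem lemma3p3 (R : comPzRingType) (M : lmodType R)
  (star : (M -> M) -> (M -> M))
  (Q : comUnitRingType) (iota : {rmorphism R -> Q})
  (N : lmodType Q) (jM : M -> N) (n : nat) (b : 'I_n -> N)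
  (C : 'M[Q]_n) (a : Q) (r s : R) :
  noetherian R -> local_ring R -> fin_gen M ->
  Rstar_algebra star ->
  total_quotient iota ->
  module_localization iota jM ->
  is_basis b ->
  C \in unitmx -> C^T = a *: C -> a ^+ 2 = 1 ->
  (forall f, Rlin f -> forall A : 'M[Q]_n, represents jM b f A ->
     represents jM b (star f) (invmx C *m A^T *m C)) ->
  nzd r -> nzd s -> iota r = a * iota s ->
  forall l : seq (R * M * M),
    exists u : R, nzd u /\ tensor_zero star (rscale u (T_elem s r l)).
Proof.
move=> _ _ hfg hst htq hml hbas _ hCT _ hstar _ _ hra l.
have hp : forall x y : M, exists v, nzd v /\ works star s r v x y.
  move: b C hbas hCT hstar; case: n => [|n'] b C hbas hCT hstar.
  - exact: (pair_zero r s hst hml hbas).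
  - exact: (pair_succ hfg hst htq hml hbas hCT hstar hra).
have [u [hu H]] := works_list hst hp l.
by exists u; split => //; have := H 1; rewrite mul1r.
Qed.
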